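(* Let $\mathcal{T}=(X,A,Z,(f_n))$ be a mapping tuple, fix a compatible metric on $Z$, let $d\in\omega$ and $(u,(V_x)_{x\in X})\in U_{\mathcal{T}}$. Then there is a family $(W_x)_{x\in X}$ of subsets of $Z$ such that (a) $(u,(W_x)_{x\in X})\in E_{\mathcal{T}}$; (b) for each $x\in X$, $W_x\subseteq V_x$, $W_x$ is clopen and $\mathrm{diam}(W_x)\le 2^{-d}$; (c) $W_x\cap W_y=\emptyset$ for $x\ne y$ in $X$.
   Context: An oriented graph on $X$ is an irreflexive $A\subseteq X^2$ with $A\cap A^{-1}=\emptyset$; $s(A)=A\cup A^{-1}$; $\mathrm{Succ}(x)=\{y:(x,y)\in A\}$. $A$ is an uogas if it is an oriented graph, $|\mathrm{Succ}(x)|\le1$ for all $x$, and $s(A)$ is acyclic (no injective $s(A)$-path $(x_i)_{i\le n}$, $n\ge2$, with $(x_n,x_0)\in s(A)$). A strongly complex situation is $(Z,(f_n)_{n\in\omega})$ with $Z$ a nonempty zero-dimensional perfect Polish space, each $f_n$ a partial continuous open map on $Z$ with clopen domain $D_n$ and clopen range, $\Delta(Z)\subseteq\overline{\bigcup_n\mathrm{Graph}(f_n)}\setminus\bigcup_n\mathrm{Graph}(f_n)$, and the restriction of any $f_n$ to any nonempty open subset of $D_n$ not countable-to-one. A mapping tuple is $\mathcal{T}=(X,A,Z,(f_n))$ with $A$ an uogas on a finite set $X$ and $(Z,(f_n))$ a strongly complex situation. $E_{\mathcal{T}}$ (resp. $U_{\mathcal{T}}$) is the set of pairs $(u,(V_x)_{x\in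 X})$ with $u\in\omega^X$ and each $V_x$ a nonempty open subset of $Z$ such that for all $(x,y)\in A$: $V_x\subseteq D_{u(x)}$ and $V_y=f_{u(x)}[V_x]$ (resp. $V_y\subseteq f_{u(x)}[V_x]$). *)

(* Defs.v *)
From Stdlib Require Import Reals List.
Open Scope R_scope.

Section Topology.
Variable Z : Type.
Variable dist : Z -> Z -> R.

Definition is_metric : Prop :=
  (forall x y, 0 <= dist x y) /\ (forall x y, dist x y = 0 <-> x = y) /\
  (forall x y, dist x y = dist y x) /\
  (forall x y z, dist x z <= dist x y + dist y z).

Definition open_set (U : Z -> Prop) : Prop :=
  forall x, U x -> exists eps, 0 < eps /\ forall y, dist x y < eps -> U y.

Definition clopen (U : Z -> Prop) : Prop :=
  open_set U /\ open_set (fun z => ~ U z).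

Definition subset (U V : Z -> Prop) : Prop := forall z, U z -> V z.

Definition nonempty (U : Z -> Prop) : Prop := exists z, U z.

Definition diam_le (W : Z -> Prop) (r : R) : Prop :=
  forall a b, W a -> W b -> dist a b <= r.

Definition cauchy_seq (s : nat -> Z) : Prop :=
  forall eps, 0 < eps -> exists N, forall m n, (N <= m)%nat -> (N <= n)%nat ->
    dist (s m) (s n) < eps.

Definition converges (s : nat -> Z) (l : Z) : Prop :=
  forall eps, 0 < eps -> exists N, forall n, (N <= n)%nat -> dist (s n) l < eps.

Definition complete_metric : Prop :=
  forall s, cauchy_seq s -> exists l, converges s l.

Definition separable : Prop :=
  exists s : nat -> Z, forall x eps, 0 < eps -> exists n, dist x (s n) < eps.

Definition countable_set (S : Z -> Prop) : Prop :=
  exists h : Z -> nat, forall a b, S a -> S b -> h a = h b -> a = b.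

End Topology.

Arguments is_metric {Z}. Arguments open_set {Z}. Arguments clopen {Z}.
Arguments subset {Z}. Arguments nonempty {Z}. Arguments diam_le {Z}.
Arguments complete_metric {Z}. Arguments separable {Z}.
Arguments countable_set {Z}.

Definition same_topology {Z : Type} (d1 d2 : Z -> Z -> R) : Prop :=
  forall U, open_set d1 U <-> open_set d2 U.

(* (Z, topology of dist) is Polish and dist is a compatible metric. *)
Definition polish {Z : Type} (dist : Z -> Z -> R) : Prop :=
  is_metric dist /\ separable dist /\
  exists d', is_metric d' /\ same_topology dist d' /\ complete_metric d'.

Definition zero_dimensional {Z : Type} (dist : Z -> Z -> R) : Prop :=
  forall U x, open_set dist U -> U x ->
    exists C, clopen dist C /\ C x /\ subset C U.

Definition perfect {Z : Type} (dist : Z -> Z -> R) : Prop :=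
  forall x eps, 0 < eps -> exists y, y <> x /\ dist x y < eps.

(* A partial map on Z is given by a domain D and a function f (values of f
   outside D are irrelevant). *)
Definition image {Z : Type} (f : Z -> Z) (U : Z -> Prop) : Z -> Prop :=
  fun w => exists z, U z /\ f z = w.

Definition partial_cont_open_clopen {Z : Type} (dist : Z -> Z -> R)
    (D : Z -> Prop) (f : Z -> Z) : Prop :=
  clopen dist D /\ clopen dist (image f D) /\
  (forall z, D z -> forall eps, 0 < eps -> exists delta, 0 < delta /\
     forall w, D w -> dist z w < delta -> dist (f z) (f w) < eps) /\
  (forall U, open_set dist U -> subset U D -> open_set dist (image f U)).

Definition countable_to_one_on {Z : Type} (f : Z -> Z) (U : Z -> Prop) : Prop :=
  forall y, countable_set (fun z => U z /\ f z = y).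

Definition strongly_complex_situation {Z : Type} (dist : Z -> Z -> R)
    (D : nat -> Z -> Prop) (f : nat -> Z -> Z) : Prop :=
  (exists z : Z, True) /\ polish dist /\ zero_dimensional dist /\ perfect dist /\
  (forall n, partial_cont_open_clopen dist (D n) (f n)) /\
  (* Delta(Z) is contained in the closure (in Z x Z) of the union of graphs *)
  (forall z eps, 0 < eps -> exists n w, D n w /\ dist z w < eps /\ dist z (f n w) < eps) /\
  (forall n z, D n z -> f n z <> z) /\
  (forall n U, open_set dist U -> subset U (D n) -> nonempty U ->
     ~ countable_to_one_on (f n) U).

Definition symA {X : Type} (A : X -> X -> Prop) (x y : X) : Prop := A x y \/ A y x.

Fixpoint chain {X : Type} (R : X -> X -> Prop) (x0 : X) (l : list X) : Prop :=
  match l with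
  | nil => True
  | x1 :: l' => R x0 x1 /\ chain R x1 l'
  end.

Definition finite_type (X : Type) : Prop := exists l : list X, forall x, In x l.

Definition uogas {X : Type} (A : X -> X -> Prop) : Prop :=
  (forall x, ~ A x x) /\ (forall x y, A x y -> ~ A y x) /\
  (forall x y y', A x y -> A x y' -> y = y') /\
  (forall x0 l, NoDup (x0 :: l) -> (2 <= length l)%nat -> chain (symA A) x0 l ->
     ~ symA A (last l x0) x0).

Definition mapping_tuple {X Z : Type} (A : X -> X -> Prop) (dist : Z -> Z -> R)
    (D : nat -> Z -> Prop) (f : nat -> Z -> Z) : Prop :=
  finite_type X /\ uogas A /\ strongly_complex_situation dist D f.

Definition in_E {X Z : Type} (A : X -> X -> Prop) (dist : Z -> Z -> R)
    (D : nat -> Z -> Prop) (f : nat -> Z -> Z) (u : X -> nat) (V : X -> Z -> Prop) : Prop :=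
  (forall x, open_set dist (V x) /\ nonempty (V x)) /\
  (forall x y, A x y -> subset (V x) (D (u x)) /\
     forall w, V y w <-> image (f (u x)) (V x) w).

Definition in_U {X Z : Type} (A : X -> X -> Prop) (dist : Z -> Z -> R)
    (D : nat -> Z -> Prop) (f : nat -> Z -> Z) (u : X -> nat) (V : X -> Z -> Prop) : Prop :=
  (forall x, open_set dist (V x) /\ nonempty (V x)) /\
  (forall x y, A x y -> subset (V x) (D (u x)) /\
     subset (V y) (image (f (u x)) (V x))).

(* Main.v *)
Require Import Defs.
From Stdlib Require Import Reals List.
From Stdlib Require Import Lra Lia ClassicalEpsilon IndefiniteDescription Classical.

Open Scope nat_scope.
Section Graph.
Variable X : Type.
Variable A : X -> X -> Prop.
Hypothesis HA : uogas A.
Variable l : list X.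
Hypothesis Hl : forall x, In x l.

Fixpoint run (g : nat -> X) (a n : nat) : list X :=
  match n with 0 => nil | S n' => g a :: run g (S a) n' end.

Lemma run_In g n : forall a z, In z (run g a n) -> exists t, a <= t < a + n /\ g t = z.
Proof.
  induction n as [|n IH]; intros a z H; simpl in H. destruct H.
  destruct H as [<-|H]. exists a. split; auto; lia.
  destruct (IH _ _ H) as [t [Ht E]]. exists t. split; auto; lia.
Qed.

Lemma run_len g n : forall a, length (run g a n) = n.
Proof. induction n; simpl; auto. Qed.

Lemma run_nodup g n : forall a, (forall s t, a <= s < a + n -> a <= t < a + n -> g s = g t -> s = t) ->
  NoDup (run g a n).
Proof.
  induction n as [|n IH]; intros a H; simpl. constructor.
  constructor.
  - intro Hin. destruct (run_In g n (S a) (g a) Hin) as [t [Ht E]].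
    assert (t = a) by (apply H; auto; lia). lia.
  - apply IH. intros. apply H; auto; lia.
Qed.

Lemma run_chain g (He : forall i, A (g i) (g (S i))) n : forall a, chain (symA A) (g a) (run g (S a) n).
Proof.
  induction n as [|n IH]; intros a; simpl; auto. split. left. auto. apply IH.
Qed.

Lemma run_last g n : forall b d, last (run g b (S n)) d = g (b + n)%nat.
Proof.
  induction n as [|n IH]; intros b d. simpl. f_equal. lia.
  change (run g b (S (S n))) with (g b :: run g (S b) (S n)).
  change (last (g b :: run g (S b) (S n)) d) with (last (run g (S b) (S n)) d).
  rewrite IH. f_equal. lia.
Qed.

Lemma no_cycle g (He : forall i, A (g i) (g (S i))) :
  forall k, (1 <= k)%nat -> forall i, g i <> g (i + k)%nat.
Proof.
  destruct HA as [Hirr [Hanti [Hfun Hcyc]]].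
  intro k. induction k as [k IH] using (well_founded_induction Wf_nat.lt_wf).
  intros Hk i E.
  assert (Hinj : forall s t, i <= s < i + k -> i <= t < i + k -> g s = g t -> s = t).
  { intros s t Hs Ht Est. apply NNPP. intro Hne.
    destruct (Nat.lt_gt_cases s t) as [[Hlt|Hlt] _]. lia.
    - apply (IH (t - s)%nat ltac:(lia) ltac:(lia) s). replace (s + (t - s))%nat with t by lia. auto.
    - apply (IH (s - t)%nat ltac:(lia) ltac:(lia) t). replace (t + (s - t))%nat with s by lia. auto. }
  destruct (Nat.lt_ge_cases k 3) as [Hk3|Hk3].
  - destruct (Nat.eq_dec k 1) as [->|Hk1].
    + pose proof (He i). replace (i+1)%nat with (S i) in E by lia.
      rewrite <- E in H. exact (Hirr _ H).
    + assert (k = 2%nat) by lia. subst k.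
      apply (Hanti (g i) (g (S i)) (He i)). pose proof (He (S i)).
      replace (S (S i)) with (i + 2)%nat in H by lia. rewrite <- E in H. auto.
  - apply (Hcyc (g i) (run g (S i) (k - 1))).
    + change (g i :: run g (S i) (k - 1)) with (run g i (S (k - 1))). apply run_nodup. intros s t Hs Ht Est; apply Hinj; auto; lia.
    + rewrite run_len. lia.
    + apply run_chain; auto.
    + replace (k - 1)%nat with (S (k - 2)) by lia. rewrite run_last.
      left. pose proof (He (S i + (k - 2))%nat). replace (S (S i + (k - 2))) with (i + k)%nat in H by lia.
      rewrite <- E in H. auto.
Qed.

Inductive deprel : X -> nat -> Prop :=
| dep0 x : (forall y, ~ A x y) -> deprel x 0
| depS x y n : A x y -> deprel y n -> deprel x (S n).

Lemma deprel_unique x n : deprel x n -> forall m, deprel x m -> n = m.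
Proof.
  destruct HA as [Hirr [Hanti [Hfun Hcyc]]].
  induction 1 as [x Hx|x y n Hxy Hy IH]; intros m Hm; inversion Hm; subst; auto.
  - exfalso. eapply Hx; eauto.
  - exfalso. eapply H; eauto.
  - f_equal. apply IH. rewrite (Hfun x y y0 Hxy H); auto.
Qed.

Lemma deprel_edge : forall x n, deprel x n -> forall y m, A x y -> deprel y m -> n = S m.
Proof.
  destruct 1 as [x0 Hr|x0 y0 n0 Hxy0 Hd]; intros y m Hxy Hm.
  - exfalso. eapply Hr; eauto.
  - destruct HA as [_ [_ [Hfun _]]]. rewrite (Hfun _ _ _ Hxy0 Hxy) in Hd. f_equal.
    eapply deprel_unique; eauto.
Qed.

Lemma deprel_exists x0 : exists n, deprel x0 n.
Proof.
  apply NNPP. intro Hno.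
  set (ND := fun x => ~ exists n, deprel x n).
  assert (Hnext : forall x, exists y, ND x -> A x y /\ ND y).
  { intro x. destruct (classic (ND x)) as [Hx|Hx]; [|exists x; intro; contradiction].
    destruct (classic (exists y, A x y)) as [[y Hy]|Hny].
    - exists y. intros _. split; auto. intros [n Hn]. apply Hx. exists (S n). econstructor; eauto.
    - exfalso. apply Hx. exists 0%nat. constructor. intros y Hy. apply Hny. eauto. }
  destruct (functional_choice _ Hnext) as [nx Hnx].
  set (g := fun i => Nat.iter i nx x0).
  assert (Hg : forall i, ND (g i) /\ A (g i) (g (S i))).
  { induction i as [|i IH].
    - simpl. split. exact Hno. apply (Hnx x0 Hno).
    - destruct IH as [H1 H2].
      destruct (Hnx _ H1) as [H3 H4]. simpl in *. split. exact H4. apply (Hnx _ H4). }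
  assert (He : forall i, A (g i) (g (S i))) by (intro; apply Hg).
  destruct (classic (forall s t, (0 <= s < 0 + S (length l))%nat -> (0 <= t < 0 + S (length l))%nat -> g s = g t -> s = t))
    as [Hinj|Hninj].
  - pose proof (run_nodup g (S (length l)) 0 Hinj) as HN.
    assert (incl (run g 0 (S (length l))) l) by (intros z _; apply Hl).
    pose proof (NoDup_incl_length HN H). rewrite run_len in H0. lia.
  - apply Hninj. intros s t Hs Ht Est. apply NNPP. intro Hne.
    destruct (Nat.lt_gt_cases s t) as [[Hlt|Hlt] _]. lia.
    + apply (no_cycle g He (t - s)%nat ltac:(lia) s). replace (s + (t - s))%nat with t by lia. auto.
    + apply (no_cycle g He (s - t)%nat ltac:(lia) t). replace (t + (s - t))%nat with s by lia. auto.
Qed.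

End Graph.

Open Scope R_scope.

Section Met.
Variable Z : Type.
Variable dist : Z -> Z -> R.
Hypothesis Hm : is_metric dist.

Lemma d_nn x y : 0 <= dist x y.
Proof. destruct Hm as [H _]. apply H. Qed.
Lemma d_refl x : dist x x = 0.
Proof. destruct Hm as [_ [H _]]. apply H. reflexivity. Qed.
Lemma d_eq x y : dist x y = 0 -> x = y.
Proof. destruct Hm as [_ [H _]]. apply H. Qed.
Lemma d_sym x y : dist x y = dist y x.
Proof. destruct Hm as [_ [_ [H _]]]. apply H. Qed.
Lemma d_tri x y z : dist x z <= dist x y + dist y z.
Proof. destruct Hm as [_ [_ [_ H]]]. apply H. Qed.

Lemma d_pos x y : x <> y -> 0 < dist x y.
Proof. intro H. destruct (d_nn x y) as [h|h]; auto. exfalso. apply H, d_eq. auto. Qed.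

Lemma open_ball c r : Defs.open_set dist (fun y => dist c y < r).
Proof.
  intros x Hx. exists (r - dist c x). split; [lra|].
  intros y Hy. pose proof (d_tri c x y). lra.
Qed.

Lemma open_far c r : Defs.open_set dist (fun y => r < dist c y).
Proof.
  intros x Hx. exists (dist c x - r). split; [lra|].
  intros y Hy. pose proof (d_tri c y x). rewrite (d_sym y x) in H. lra.
Qed.

Lemma open_and U W : Defs.open_set dist U -> Defs.open_set dist W -> Defs.open_set dist (fun z => U z /\ W z).
Proof.
  intros HU HW x [Ux Wx].
  destruct (HU x Ux) as [e1 [He1 H1]]. destruct (HW x Wx) as [e2 [He2 H2]].
  exists (Rmin e1 e2). split. apply Rmin_glb_lt; auto.
  intros y Hy. split; [apply H1|apply H2]; eapply Rlt_le_trans; eauto; [apply Rmin_l|apply Rmin_r].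
Qed.

Lemma open_ext U W : (forall z, U z <-> W z) -> Defs.open_set dist U -> Defs.open_set dist W.
Proof.
  intros E HU x Wx. apply E in Wx. destruct (HU x Wx) as [e [He H]].
  exists e. split; auto. intros. apply E. auto.
Qed.

Lemma clopen_ext U W : (forall z, U z <-> W z) -> clopen dist U -> clopen dist W.
Proof.
  intros E [H1 H2]. split. eapply open_ext; eauto.
  eapply open_ext; [|exact H2]. intro z. split; intros H H'; apply H, E; auto.
Qed.

Lemma open_forall_list (I : Type) (L : list I) (P : I -> Prop) (O : I -> Z -> Prop) :
  (forall i, In i L -> P i -> Defs.open_set dist (O i)) ->
  Defs.open_set dist (fun z => forall i, In i L -> P i -> O i z).
Proof.
  induction L as [|a L IH]; intros Ho x Hx.
  - exists 1. split; [lra|]. intros y _ i Hi. destruct Hi.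
  - assert (IH' : Defs.open_set dist (fun z => forall i, In i L -> P i -> O i z)).
    { apply IH. intros. apply Ho; simpl; auto. }
    destruct (IH' x) as [e1 [He1 H1]]. { intros. apply Hx; simpl; auto. }
    destruct (classic (P a)) as [Pa|nPa].
    + destruct (Ho a (or_introl eq_refl) Pa x (Hx a (or_introl eq_refl) Pa)) as [e2 [He2 H2]].
      exists (Rmin e1 e2). split. apply Rmin_glb_lt; auto.
      intros y Hy i [<-|Hi] Pi.
      * apply H2. eapply Rlt_le_trans; eauto; apply Rmin_r.
      * apply H1; auto. eapply Rlt_le_trans; eauto; apply Rmin_l.
    + exists e1. split; auto. intros y Hy i [<-|Hi] Pi. contradiction. apply H1; auto.
Qed.

Definition dense (G W : Z -> Prop) : Prop :=
  forall z, W z -> forall eps, 0 < eps -> exists z', G z' /\ dist z z' < eps.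

Lemma dense_inter_list (I : Type) (L : list I) (P : I -> Prop) (G : I -> Z -> Prop) (W : Z -> Prop) :
  Defs.open_set dist W ->
  (forall i, In i L -> P i -> Defs.open_set dist (G i) /\ dense (G i) W) ->
  forall z, W z -> forall eps, 0 < eps ->
    exists z', W z' /\ (forall i, In i L -> P i -> G i z') /\ dist z z' < eps.
Proof.
  intro HW. induction L as [|a L IH]; intros HG z0 Wz eps Heps.
  - exists z0. split; auto. split. intros i []. rewrite d_refl. auto.
  - assert (IH' := IH (fun i Hi => HG i (or_intror Hi))).
    destruct (classic (P a)) as [Pa|nPa].
    + destruct (HG a (or_introl eq_refl) Pa) as [Go Gd].
      destruct (HW z0 Wz) as [e0 [He0 H0]].
      destruct (Gd z0 Wz (Rmin (eps/2) e0)) as [z1 [G1 D1]].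
      { apply Rmin_glb_lt; lra. }
      assert (W1 : W z1). { apply H0. eapply Rlt_le_trans; eauto. apply Rmin_r. }
      destruct (Go z1 G1) as [e1 [He1 H1]].
      destruct (IH' z1 W1 (Rmin (eps/2) e1)) as [z2 [W2 [G2 D2]]].
      { apply Rmin_glb_lt; lra. }
      exists z2. split; auto. split.
      * intros i [<-|Hi] Pi; auto. apply H1. eapply Rlt_le_trans; eauto. apply Rmin_r.
      * pose proof (d_tri z0 z1 z2). pose proof (Rmin_l (eps/2) e0). pose proof (Rmin_l (eps/2) e1). lra.
    + destruct (IH' z0 Wz eps Heps) as [z2 [W2 [G2 D2]]].
      exists z2. split; auto. split; auto. intros i [<-|Hi] Pi; auto. contradiction.
Qed.

Lemma avoid_ball (Hp : perfect dist) (F : list Z) :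
  forall c eps, 0 < eps -> exists z, dist c z < eps /\ ~ In z F.
Proof.
  induction F as [|a F IH]; intros c eps Heps.
  - exists c. rewrite d_refl. split; auto.
  - assert (Hne : forall c' e', 0 < e' -> c' <> a -> exists z, dist c' z < e' /\ ~ In z (a :: F)).
    { intros c' e' He' Hne. pose proof (d_pos _ _ Hne).
      destruct (IH c' (Rmin e' (dist c' a))) as [z [Dz Nz]]. apply Rmin_glb_lt; auto.
      exists z. split. eapply Rlt_le_trans; eauto. apply Rmin_l.
      intros [E|Hz]; [|auto]. rewrite <- E in Dz. pose proof (Rmin_r e' (dist c' a)). lra. }
    destruct (classic (c = a)) as [<-|Hca]; [|apply Hne; auto].
    destruct (Hp c (eps/2)) as [y [Hyc Dy]]. lra.
    destruct (Hne y (eps/2)) as [z [Dz Nz]]; auto. lra.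
    exists z. split; auto. pose proof (d_tri c y z). lra.
Qed.

Lemma avoid_open (Hp : perfect dist) (O : Z -> Prop) (z0 : Z) (F : list Z) :
  Defs.open_set dist O -> O z0 -> exists z, O z /\ ~ In z F.
Proof.
  intros HO Oz. destruct (HO z0 Oz) as [e [He H]].
  destruct (avoid_ball Hp F z0 e He) as [z [Dz Nz]]. exists z. auto.
Qed.

Lemma min_dist_list (a : Z) (L : list Z) : ~ In a L -> exists r, 0 < r /\ forall z, In z L -> r < dist a z.
Proof.
  induction L as [|b L IH]; intros Hn.
  - exists 1. split; [lra|]. intros z [].
  - destruct IH as [r [Hr H]]. intro; apply Hn; simpl; auto.
    assert (Hab : a <> b). { intro; apply Hn; simpl; auto. }
    pose proof (d_pos _ _ Hab).
    exists (Rmin r (dist a b / 2)). split. apply Rmin_glb_lt; lra.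
    intros z [<-|Hz]. pose proof (Rmin_r r (dist a b / 2)). lra.
    pose proof (Rmin_l r (dist a b / 2)). specialize (H z Hz). lra.
Qed.

Lemma sep_radius (I : Type) (p : I -> Z) (L : list I) :
  exists r, 0 < r /\ forall x y, In x L -> In y L -> p x <> p y -> r <= dist (p x) (p y).
Proof.
  assert (H1 : forall a, exists r, 0 < r /\ forall y, In y L -> p a <> p y -> r <= dist (p a) (p y)).
  { intro a. induction L as [|b L IH].
    - exists 1. split; [lra|]. intros y [].
    - destruct IH as [r [Hr H]].
      destruct (classic (p a = p b)) as [E|NE].
      + exists r. split; auto. intros y [<-|Hy] Hn. contradiction. auto.
      + pose proof (d_pos _ _ NE). exists (Rmin r (dist (p a) (p b))). split. apply Rmin_glb_lt; auto.
        intros y [<-|Hy] Hn. apply Rmin_r. eapply Rle_trans. apply Rmin_l. auto. }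
  assert (H2 : forall L', exists r, 0 < r /\ forall x y, In x L' -> In y L -> p x <> p y -> r <= dist (p x) (p y)).
  { induction L' as [|a L' IH].
    - exists 1. split; [lra|]. intros x y [].
    - destruct IH as [r [Hr H]]. destruct (H1 a) as [r1 [Hr1 G]].
      exists (Rmin r r1). split. apply Rmin_glb_lt; auto.
      intros x y [<-|Hx] Hy Hn. eapply Rle_trans. apply Rmin_r. auto.
      eapply Rle_trans. apply Rmin_l. auto. }
  destruct (H2 L) as [r [Hr H]]. exists r. auto.
Qed.

Lemma fin_countable (L : list Z) : forall Ss : Z -> Prop, (forall z, Ss z -> In z L) -> countable_set Ss.
Proof.
  induction L as [|a L IH]; intros Ss HS.
  - exists (fun _ => 0%nat). intros x y Sx. destruct (HS x Sx).
  - destruct (IH (fun z => Ss z /\ z <> a)) as [h Hh].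
    { intros z [Sz Hz]. destruct (HS z Sz); auto. congruence. }
    exists (fun z => if excluded_middle_informative (z = a) then 0%nat else S (h z)).
    intros x y Sx Sy. destruct (excluded_middle_informative (x = a)), (excluded_middle_informative (y = a));
      intro E; try congruence. apply Hh; auto.
Qed.

Lemma big_list (M : nat) (S : Z -> Prop) : ~ countable_set S ->
  exists L, NoDup L /\ length L = M /\ forall z, In z L -> S z.
Proof.
  intro Hc. induction M as [|M IH].
  - exists nil. repeat split; auto. constructor. intros z [].
  - destruct IH as [L [HN [Hl HS]]].
    destruct (classic (exists z, S z /\ ~ In z L)) as [[z [Sz Nz]]|Hno].
    + exists (z :: L). repeat split. constructor; auto. simpl; auto. intros w [<-|Hw]; auto.
    + exfalso. apply Hc. apply (fin_countable L). intros z Sz. apply NNPP. intro. apply Hno. eauto.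
Qed.

Lemma pick_avoid (L F : list Z) : NoDup L -> (length F < length L)%nat -> exists z, In z L /\ ~ In z F.
Proof.
  intros HN Hlt. apply NNPP. intro Hno.
  assert (incl L F). { intros z Hz. apply NNPP. intro. apply Hno. eauto. }
  pose proof (NoDup_incl_length HN H). lia.
Qed.

Definition Rich (M : nat) (g : Z -> Z) (U : Z -> Prop) (w : Z) : Prop :=
  exists L, NoDup L /\ length L = M /\ forall z, In z L -> U z /\ g z = w.

Lemma rich_open_gen (Dk : Z -> Prop) (g : Z -> Z)
  (Hopen : forall U, Defs.open_set dist U -> subset U Dk -> Defs.open_set dist (image g U)) (w : Z) :
  forall L, NoDup L -> forall U, Defs.open_set dist U -> subset U Dk -> (forall z, In z L -> U z /\ g z = w) ->
  exists eps, 0 < eps /\ forall w', dist w w' < eps ->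
    exists L', NoDup L' /\ length L' = length L /\ forall z, In z L' -> U z /\ g z = w'.
Proof.
  induction L as [|a L IH]; intros HN U HU HUD HL.
  - exists 1. split; [lra|]. intros. exists nil. split; [constructor|split; [reflexivity|intros z []]].
  - apply NoDup_cons_iff in HN. destruct HN as [Ha HN].
    destruct (min_dist_list a L Ha) as [rho [Hrho Hfar]].
    destruct (IH HN (fun z => U z /\ rho < dist a z)) as [e0 [He0 H0]].
    + apply open_and; auto. apply open_far.
    + intros z [Uz _]. auto.
    + intros z Hz. destruct (HL z (or_intror Hz)) as [Uz gz]. auto.
    + destruct (HL a (or_introl eq_refl)) as [Ua ga].
      assert (Ho1 : Defs.open_set dist (image g (fun z => U z /\ dist a z < rho))).
      { apply Hopen. apply open_and; auto. apply open_ball. intros z [Uz _]. auto. }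
      destruct (Ho1 w) as [e1 [He1 H1]]. { exists a. rewrite d_refl. auto. }
      exists (Rmin e0 e1). split. apply Rmin_glb_lt; auto.
      intros w' Hw'. destruct (H0 w') as [L' [HN' [Hl' HL']]].
      { eapply Rlt_le_trans; eauto; apply Rmin_l. }
      destruct (H1 w') as [a' [[Ua' Da'] ga']]. { eapply Rlt_le_trans; eauto; apply Rmin_r. }
      exists (a' :: L'). split; [|split].
      * constructor; auto. intro Hin. destruct (HL' a' Hin) as [[_ F] _]. lra.
      * simpl. auto.
      * intros z [<-|Hz]. auto. destruct (HL' z Hz) as [[Uz _] gz]. auto.
Qed.

Lemma rich_open (M : nat) (Dk : Z -> Prop) (g : Z -> Z)
  (Hopen : forall U, Defs.open_set dist U -> subset U Dk -> Defs.open_set dist (image g U)) (U : Z -> Prop) :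
  Defs.open_set dist U -> subset U Dk -> Defs.open_set dist (Rich M g U).
Proof.
  intros HU HUD w [L [HN [Hl HL]]].
  destruct (rich_open_gen Dk g Hopen w L HN U HU HUD HL) as [e [He H]].
  exists e. split; auto. intros w' Hw'. destruct (H w' Hw') as [L' [? [? ?]]].
  exists L'. repeat split; auto; try lia; apply H2; auto.
Qed.

Lemma rich_dense (M : nat) (Dk : Z -> Prop) (g : Z -> Z)
  (Hcont : forall z, Dk z -> forall eps, 0 < eps -> exists delta, 0 < delta /\
     forall w, Dk w -> dist z w < delta -> dist (g z) (g w) < eps)
  (Hncc : forall U, Defs.open_set dist U -> subset U Dk -> nonempty U -> ~ countable_to_one_on g U)
  (U : Z -> Prop) : Defs.open_set dist U -> subset U Dk ->
  forall z, U z -> forall eps, 0 < eps -> exists w', Rich M g U w' /\ dist (g z) w' < eps.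
Proof.
  intros HU HUD z Uz eps Heps.
  destruct (Hcont z (HUD z Uz) eps Heps) as [dl [Hdl Hc]].
  assert (Hn := Hncc (fun y => U y /\ dist z y < dl)).
  assert (Hne0 : nonempty (fun y => U y /\ dist z y < dl)).
  { exists z. split; auto. rewrite d_refl. auto. }
  destruct (not_all_ex_not _ _ (Hn (open_and _ _ HU (open_ball z dl))
     (fun y Hy => HUD y (proj1 Hy)) Hne0)) as [y Hy].
  destruct (big_list M _ Hy) as [L [HN [Hl HL]]].
  assert (Hne : exists t, (U t /\ dist z t < dl) /\ g t = y).
  { apply NNPP. intro Hno. apply Hy. exists (fun _ => 0%nat). intros a b Ha. exfalso. apply Hno. eauto. }
  destruct Hne as [t [[Ut Dt] gt]].
  exists y. split.
  - exists L. repeat split; auto; apply HL; auto.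
  - rewrite <- gt. apply Hc; auto.
Qed.

Section Main.
Variable X : Type.
Variable A : X -> X -> Prop.
Variable D : nat -> Z -> Prop.
Variable f : nat -> Z -> Z.
Variable u : X -> nat.
Variable V : X -> Z -> Prop.
Hypothesis Hzd : zero_dimensional dist.
Hypothesis Hperf : perfect dist.
Hypothesis Hpc : forall n, partial_cont_open_clopen dist (D n) (f n).
Hypothesis Hncc : forall n U, Defs.open_set dist U -> subset U (D n) -> nonempty U ->
     ~ countable_to_one_on (f n) U.
Variable z0 : Z.
Hypothesis HA : uogas A.
Variable l : list X.
Hypothesis Hl : forall x, In x l.
Hypothesis HVo : forall x, Defs.open_set dist (V x) /\ nonempty (V x).
Hypothesis HVe : forall x y, A x y -> subset (V x) (D (u x)) /\ subset (V y) (image (f (u x)) (V x)).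

Lemma Hcont n : forall z, D n z -> forall eps, 0 < eps -> exists delta, 0 < delta /\
     forall w, D n w -> dist z w < delta -> dist (f n z) (f n w) < eps.
Proof. destruct (Hpc n) as [_ [_ [H _]]]. exact H. Qed.

Lemma Hopen n : forall U, Defs.open_set dist U -> subset U (D n) -> Defs.open_set dist (image (f n) U).
Proof. destruct (Hpc n) as [_ [_ [_ H]]]. exact H. Qed.

Lemma Afun x y y' : A x y -> A x y' -> y = y'.
Proof. destruct HA as [_ [_ [H _]]]. apply H. Qed.

Lemma Airr x : ~ A x x.
Proof. destruct HA as [H _]. apply H. Qed.

Definition dep (x : X) : nat :=
  proj1_sig (constructive_indefinite_description _ (deprel_exists X A HA l Hl x)).

Lemma dep_spec x : deprel X A x (dep x).
Proof. unfold dep. destruct (constructive_indefinite_description _ _). simpl. auto. Qed.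

Lemma dep_edge x y : A x y -> dep x = S (dep y).
Proof.
  intro Hxy. eapply deprel_edge; eauto; apply dep_spec.
Qed.

Definition Nmax : nat := fold_right (fun x m => Nat.max (dep x) m) 0%nat l.

Lemma dep_le x : (dep x <= Nmax)%nat.
Proof.
  assert (forall L, In x L -> (dep x <= fold_right (fun x m => Nat.max (dep x) m) 0%nat L)%nat).
  { induction L as [|a L IH]; intros H; simpl in *. destruct H.
    destruct H as [<-|H]. lia. specialize (IH H). lia. }
  apply H, Hl.
Qed.

Definition M : nat := S (length l).

Definition InvV (k : nat) (Vs : X -> Z -> Prop) : Prop :=
  forall x, (k <= dep x)%nat ->
    (Defs.open_set dist (Vs x) /\ subset (Vs x) (V x) /\ dense (Vs x) (V x)) /\
    (forall c, A c x -> forall w, Vs x w -> Rich M (f (u c)) (Vs c) w).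

Lemma rich_dense_edge c x (Hc : A c x) (Vc : Z -> Prop) :
  Defs.open_set dist Vc -> subset Vc (V c) -> dense Vc (V c) ->
  dense (Rich M (f (u c)) Vc) (V x).
Proof.
  intros Ho Hs Hd w Vw eps Heps.
  destruct (HVe c x Hc) as [HsD Himg].
  destruct (Himg w Vw) as [z [Vz fz]]. subst w.
  destruct (Hcont (u c) z (HsD z Vz) (eps/2)) as [dl [Hdl Hc']]. lra.
  destruct (Hd z Vz dl Hdl) as [z' [Vz' Dz']].
  assert (Dz1 := Hc' z' (HsD z' (Hs z' Vz')) Dz').
  destruct (rich_dense M (D (u c)) (f (u c)) (Hcont (u c)) (Hncc (u c)) Vc Ho
     (fun t Ht => HsD t (Hs t Ht)) z' Vz' (eps/2)) as [w' [Rw' Dw']]. lra.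
  exists w'. split; auto. pose proof (d_tri (f (u c) z) (f (u c) z') w'). lra.
Qed.

Lemma invV_step k Vs : InvV (S k) Vs -> exists Vs', InvV k Vs'.
Proof.
  intro H.
  set (NS := fun x w => V x w /\ forall c, A c x -> Rich M (f (u c)) (Vs c) w).
  exists (fun x => if Nat.eq_dec (dep x) k then NS x else Vs x).
  intros x Hx.
  assert (Hch : forall c, A c x -> (if Nat.eq_dec (dep c) k then NS c else Vs c) = Vs c).
  { intros c Hc. rewrite (dep_edge c x Hc). destruct (Nat.eq_dec (S (dep x)) k); [lia|auto]. }
  destruct (Nat.eq_dec (dep x) k) as [Ek|Nk].
  - assert (Hc : forall c, A c x -> Defs.open_set dist (Vs c) /\ subset (Vs c) (V c) /\ dense (Vs c) (V c)).
    { intros c Hc. apply (H c). rewrite (dep_edge c x Hc). lia. }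
    assert (HRo : forall c, A c x -> Defs.open_set dist (Rich M (f (u c)) (Vs c))).
    { intros c Hc'. destruct (Hc c Hc') as [Ho [Hs _]]. apply rich_open with (Dk := D (u c)); auto.
      apply Hopen. intros t Ht. apply (proj1 (HVe c x Hc')). auto. }
    split; [split; [|split]|].
    + apply open_ext with (U := fun w => V x w /\ forall c, In c l -> A c x -> Rich M (f (u c)) (Vs c) w).
      * intro w. unfold NS. split; intros [H1 H2]; split; auto.
      * apply open_and. apply HVo. apply open_forall_list. intros; auto.
    + intros w [Hw _]. auto.
    + intros w Vw eps Heps.
      destruct (dense_inter_list X l (fun c => A c x) (fun c => Rich M (f (u c)) (Vs c)) (V x)
        (proj1 (HVo x))) with (z := w) (eps := eps) as [w' [Vw' [Rw' Dw']]]; auto.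
      { intros c _ Hc'. split; auto. destruct (Hc c Hc') as [Ho [Hs Hd]]. apply rich_dense_edge; auto. }
      exists w'. split; auto. split; auto.
    + intros c Hc' w [_ Hw]. rewrite Hch; auto.
  - destruct (H x ltac:(lia)) as [H1 H2]. split; auto.
    intros c Hc. rewrite Hch; auto.
Qed.

Lemma invV_all : exists Vs, InvV 0 Vs.
Proof.
  assert (forall j k, (Nmax < j + k)%nat -> exists Vs, InvV k Vs).
  { induction j as [|j IH]; intros k Hk.
    - exists V. intros x Hx. pose proof (dep_le x). lia.
    - destruct (Nat.lt_ge_cases Nmax k).
      + exists V. intros x Hx. pose proof (dep_le x). lia.
      + destruct (IH (S k) ltac:(lia)) as [Vs HVs]. eapply invV_step; eauto. }
  apply (H (S Nmax) 0%nat). lia.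
Qed.

Section Pts.
Variable Vs : X -> Z -> Prop.
Hypothesis HVs : InvV 0 Vs.

Lemma Vs_prop x : (Defs.open_set dist (Vs x) /\ subset (Vs x) (V x) /\ dense (Vs x) (V x)) /\
    (forall c, A c x -> forall w, Vs x w -> Rich M (f (u c)) (Vs c) w).
Proof. apply HVs. lia. Qed.

Definition proc (k : nat) (L : list X) (x : X) : Prop := (dep x < k)%nat \/ (dep x = k /\ In x L).

Definition PInv (k : nat) (L : list X) (p : X -> Z) : Prop :=
  forall x, proc k L x -> Vs x (p x) /\ (forall y, A x y -> f (u x) (p x) = p y) /\
    (forall y, proc k L y -> x <> y -> p x <> p y).

Lemma choose_pt k L p a : dep a = k -> PInv k L p ->
  exists z, Vs a z /\ (forall y, A a y -> f (u a) z = p y) /\ ~ In z (map p l).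
Proof.
  intros Ea HP.
  destruct (classic (exists y, A a y)) as [[y Hy]|Hny].
  - assert (Py : proc k L y). { left. rewrite (dep_edge a y Hy) in Ea. lia. }
    destruct (HP y Py) as [Vy _].
    destruct (proj2 (Vs_prop y) a Hy (p y) Vy) as [LL [HN [Hlen HLL]]].
    destruct (pick_avoid LL (map p l) HN) as [z [Hz Nz]].
    { rewrite length_map, Hlen. unfold M. lia. }
    destruct (HLL z Hz) as [Vz fz].
    exists z. split; auto. split; auto. intros y' Hy'. rewrite <- (Afun a y y' Hy Hy'). auto.
  - destruct (Vs_prop a) as [[Ho [_ Hd]] _].
    destruct (proj2 (HVo a)) as [w Vw].
    destruct (Hd w Vw 1) as [z1 [Vz1 _]]. lra.
    destruct (avoid_open Hperf (Vs a) z1 (map p l) Ho Vz1) as [z [Vz Nz]].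
    exists z. split; auto. split; auto. intros y Hy. exfalso. apply Hny. eauto.
Qed.

Lemma pinv_cons k L p a : PInv k L p -> exists p', PInv k (a :: L) p'.
Proof.
  intro HP.
  destruct (Nat.eq_dec (dep a) k) as [Ea|Na].
  2:{ exists p. intros x Hx.
      assert (Hpr : forall y, proc k (a :: L) y -> proc k L y).
      { intros y [Hy|[Hy [E|Hy']]]. left; auto. subst; lia. right; auto. }
      destruct (HP x (Hpr x Hx)) as [H1 [H2 H3]]. split; [exact H1|split; [exact H2|]]. intros y Hy Hne. apply H3; auto. }
  destruct (choose_pt k L p a Ea HP) as [z [Vz [Ez Nz]]].
  exists (fun x => if excluded_middle_informative (x = a) then z else p x).
  assert (Hpr : forall y, proc k (a :: L) y -> y <> a -> proc k L y).
  { intros y [Hy|[Hy [E|Hy']]] Hne. left; auto. congruence. right; auto. }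
  assert (Hnot : forall y, ~ (z = p y)).
  { intros y E. apply Nz. rewrite E. apply in_map, Hl. }
  intros x Hx. destruct (excluded_middle_informative (x = a)) as [->|Nxa].
  - split; auto. split.
    + intros y Hy. destruct (excluded_middle_informative (y = a)) as [->|Nya].
      * exfalso. eapply Airr; eauto.
      * auto.
    + intros y Hy Hne. destruct (excluded_middle_informative (y = a)) as [->|Nya]. congruence. auto.
  - destruct (HP x (Hpr x Hx Nxa)) as [H1 [H2 H3]]. split; auto. split.
    + intros y Hy. destruct (excluded_middle_informative (y = a)) as [->|Nya].
      * exfalso. pose proof (dep_edge x a Hy). destruct Hx as [Hx|[Hx _]]; lia.
      * auto.
    + intros y Hy Hne. destruct (excluded_middle_informative (y = a)) as [->|Nya].
      * intro E. apply (Hnot x). auto.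
      * apply H3; auto.
Qed.

Lemma pinv_level k : exists p, PInv k nil p.
Proof.
  induction k as [|k IH].
  - exists (fun _ => z0). intros x [Hx|[_ []]]. lia.
  - assert (HL : forall L, exists p, PInv k L p).
    { induction L as [|a L IHL]; auto. destruct IHL as [p Hp]. eapply pinv_cons; eauto. }
    destruct (HL l) as [p Hp]. exists p.
    assert (Hpr : forall y, proc (S k) nil y -> proc k l y).
    { intros y [Hy|[_ []]]. destruct (Nat.eq_dec (dep y) k). right; split; auto. left; lia. }
    intros x Hx. destruct (Hp x (Hpr x Hx)) as [H1 [H2 H3]]. split; [exact H1|split; [exact H2|]]. intros y Hy Hne. apply H3; auto.
Qed.

Lemma points : exists p : X -> Z, forall x, Vs x (p x) /\ (forall y, A x y -> f (u x) (p x) = p y) /\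
    (forall y, x <> y -> p x <> p y).
Proof.
  destruct (pinv_level (S Nmax)) as [p Hp]. exists p.
  assert (Hall : forall x, proc (S Nmax) nil x). { intro x. left. pose proof (dep_le x). lia. }
  intro x. destruct (Hp x (Hall x)) as [H1 [H2 H3]]. split; [exact H1|split; [exact H2|]]. intros y Hne. apply H3; auto.
Qed.

End Pts.

Section Kset.
Variable p : X -> Z.
Hypothesis HpV : forall x, V x (p x).
Hypothesis HpE : forall x y, A x y -> f (u x) (p x) = p y.
Variable r : R.
Hypothesis Hr : 0 < r.

Definition KInv (k : nat) (K : X -> Z -> Prop) : Prop :=
  forall x, (k <= dep x)%nat -> clopen dist (K x) /\ K x (p x) /\ subset (K x) (V x) /\
    (forall z, K x z -> dist (p x) z < r) /\
    (forall c, A c x -> subset (K x) (image (f (u c)) (K c))).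

Lemma kinv_step k K : KInv (S k) K -> exists K', KInv k K'.
Proof.
  intro HK.
  assert (Hg : forall y, exists C, dep y = k -> clopen dist C /\ C (p y) /\ subset C (V y) /\
     (forall z, C z -> dist (p y) z < r) /\ (forall c, A c y -> subset C (image (f (u c)) (K c)))).
  { intro y. destruct (classic (dep y = k)) as [Ey|Ny]; [|exists (V y); intro; contradiction].
    set (O := fun w => V y w /\ dist (p y) w < r /\
                 (forall c, In c l -> A c y -> image (f (u c)) (K c) w)).
    assert (HO : Defs.open_set dist O).
    { apply open_and. apply HVo. apply open_and. apply open_ball.
      apply open_forall_list. intros c _ Hc.
      assert (Hck : (S k <= dep c)%nat) by (rewrite (dep_edge c y Hc); lia).
      destruct (HK c Hck) as [[Hco _] [_ [Hcs _]]].
      apply Hopen; auto. intros t Ht. apply (proj1 (HVe c y Hc)). auto. }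
    assert (Op : O (p y)).
    { split; auto. split. rewrite d_refl; auto.
      intros c _ Hc. assert (Hck : (S k <= dep c)%nat) by (rewrite (dep_edge c y Hc); lia).
      destruct (HK c Hck) as [_ [Hpc' _]]. exists (p c). split; auto. }
    destruct (Hzd O (p y) HO Op) as [C [HC [Cp CO]]].
    exists C. intros _. split; auto. split; auto. split; [|split].
    - intros t Ct. apply (CO t Ct).
    - intros t Ct. apply (CO t Ct).
    - intros c Hc t Ct. apply (CO t Ct); auto. }
  destruct (functional_choice _ Hg) as [g Hgs].
  exists (fun x => if Nat.eq_dec (dep x) k then g x else K x).
  intros x Hx.
  assert (Hch : forall c, A c x -> (if Nat.eq_dec (dep c) k then g c else K c) = K c).
  { intros c Hc. rewrite (dep_edge c x Hc). destruct (Nat.eq_dec (S (dep x)) k); [lia|auto]. }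
  destruct (Nat.eq_dec (dep x) k) as [Ek|Nk].
  - destruct (Hgs x Ek) as [H1 [H2 [H3 [H4 H5]]]]. split; auto. split; auto. split; auto. split; auto.
    intros c Hc. rewrite Hch; auto.
  - destruct (HK x ltac:(lia)) as [H1 [H2 [H3 [H4 H5]]]]. split; auto. split; auto. split; auto. split; auto.
    intros c Hc. rewrite Hch; auto.
Qed.

Lemma kinv_all : exists K, KInv 0 K.
Proof.
  assert (forall j k, (Nmax < j + k)%nat -> exists K, KInv k K).
  { induction j as [|j IH]; intros k Hk.
    - exists V. intros x Hx. pose proof (dep_le x). lia.
    - destruct (Nat.lt_ge_cases Nmax k).
      + exists V. intros x Hx. pose proof (dep_le x). lia.
      + destruct (IH (S k) ltac:(lia)) as [K HK]. eapply kinv_step; eauto. }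
  apply (H (S Nmax) 0%nat). lia.
Qed.

Lemma clopen_pre (Kc C : Z -> Prop) n : clopen dist Kc -> subset Kc (D n) -> clopen dist C ->
  clopen dist (fun z => Kc z /\ C (f n z)).
Proof.
  intros [Ko Kn] HKD [Co Cn]. split.
  - intros z [Kz Cz]. destruct (Ko z Kz) as [e1 [He1 H1]]. destruct (Co _ Cz) as [e2 [He2 H2]].
    destruct (Hcont n z (HKD z Kz) e2 He2) as [dl [Hdl H3]].
    exists (Rmin e1 dl). split. apply Rmin_glb_lt; auto.
    intros w Hw. assert (Kw : Kc w). { apply H1. eapply Rlt_le_trans; eauto. apply Rmin_l. }
    split; auto. apply H2. apply H3; auto. eapply Rlt_le_trans; eauto. apply Rmin_r.
  - intros z Hz. destruct (classic (Kc z)) as [Kz|NKz].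
    + assert (NC : ~ C (f n z)) by (intro; apply Hz; auto).
      destruct (Ko z Kz) as [e1 [He1 H1]]. destruct (Cn _ NC) as [e2 [He2 H2]].
      destruct (Hcont n z (HKD z Kz) e2 He2) as [dl [Hdl H3]].
      exists (Rmin e1 dl). split. apply Rmin_glb_lt; auto.
      intros w Hw [Kw Cw]. revert Cw. apply H2. apply H3; auto. eapply Rlt_le_trans; eauto. apply Rmin_r.
    + destruct (Kn z NKz) as [e [He H]]. exists e. split; auto. intros w Hw [Kw _]. revert Kw. apply H; auto.
Qed.

Section Wset.
Variable K : X -> Z -> Prop.
Hypothesis HK : KInv 0 K.
Hypothesis Hsep : forall x y, x <> y -> 2 * r <= dist (p x) (p y).

Lemma HK0 x : clopen dist (K x) /\ K x (p x) /\ subset (K x) (V x) /\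
    (forall z, K x z -> dist (p x) z < r) /\
    (forall c, A c x -> subset (K x) (image (f (u c)) (K c))).
Proof. apply HK. lia. Qed.

Fixpoint good (n : nat) (x : X) (z : Z) : Prop :=
  K x z /\ match n with 0 => True | S n' => forall y, A x y -> good n' y (f (u x) z) end.

Definition W (x : X) (z : Z) : Prop := forall n, good n x z.

Lemma W_K x z : W x z -> K x z.
Proof. intro H. apply (H 0%nat). Qed.

Lemma W_edge x y z : A x y -> (W x z <-> K x z /\ W y (f (u x) z)).
Proof.
  intro Hxy. split.
  - intro HW. split. apply (HW 0%nat). intro n. destruct (HW (S n)) as [_ H]. apply H; auto.
  - intros [Kz Wy] n. destruct n. split; auto. split; auto. intros y' Hy'.
    rewrite <- (Afun x y y' Hxy Hy'). apply Wy.
Qed.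

Lemma W_root x z : (forall y, ~ A x y) -> (W x z <-> K x z).
Proof.
  intro Hn. split. apply W_K. intros Kz n. destruct n; split; auto. intros y Hy. exfalso. eapply Hn; eauto.
Qed.

Lemma W_step x : (forall y, A x y -> clopen dist (W y) /\ W y (p y)) -> clopen dist (W x) /\ W x (p x).
Proof.
  intro IH. destruct (HK0 x) as [Kc [Kp [KV _]]].
  destruct (classic (exists y, A x y)) as [[y Hy]|Hny].
  - destruct (IH y Hy) as [Wc Wp]. split.
    + apply clopen_ext with (U := fun z => K x z /\ W y (f (u x) z)).
      * intro z. symmetry. apply W_edge; auto.
      * apply clopen_pre; auto. intros t Ht. apply (proj1 (HVe x y Hy)). auto.
    + apply W_edge with y; auto. split; auto. rewrite (HpE x y Hy). auto.
  - assert (Hn : forall y, ~ A x y) by (intros y Hy; apply Hny; eauto).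
    split.
    + apply clopen_ext with (U := K x); auto. intro z. symmetry. apply W_root; auto.
    + apply W_root; auto.
Qed.

Lemma W_good x : clopen dist (W x) /\ W x (p x).
Proof.
  assert (forall k x, dep x = k -> clopen dist (W x) /\ W x (p x)).
  { induction k as [|k IHk]; intros x' Hx; apply W_step; intros y Hy; rewrite (dep_edge x' y Hy) in Hx.
    - lia.
    - apply IHk. lia. }
  eauto.
Qed.

Lemma W_final :
  in_E A dist D f u W /\
  (forall x, subset (W x) (V x) /\ clopen dist (W x) /\ diam_le dist (W x) (2 * r)) /\
  (forall x y, x <> y -> forall z, W x z -> W y z -> False).
Proof.
  split; [split|split].
  - intro x. destruct (W_good x) as [[Wo _] Wp]. split; auto. exists (p x). auto.
  - intros x y Hxy. split.
    + intros z Wz. apply (proj1 (HVe x y Hxy)). destruct (HK0 x) as [_ [_ [KV _]]]. apply KV, W_K. auto.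
    + intro w. split.
      * intro Wy. destruct (HK0 y) as [_ [_ [_ [_ Himg]]]].
        destruct (Himg x Hxy w (W_K y w Wy)) as [z [Kz fz]]. exists z. split; auto.
        apply W_edge with y; auto. split; auto. rewrite fz. auto.
      * intros [z [Wz fz]]. subst w. apply (W_edge x y z Hxy). auto.
  - intro x. destruct (HK0 x) as [_ [_ [KV [Kb _]]]]. split; [|split].
    + intros z Wz. apply KV, W_K; auto.
    + apply W_good.
    + intros a b Wa Wb. pose proof (Kb a (W_K _ _ Wa)). pose proof (Kb b (W_K _ _ Wb)).
      pose proof (d_tri a (p x) b). rewrite (d_sym a (p x)) in H1. lra.
  - intros x y Hxy z Wx Wy.
    destruct (HK0 x) as [_ [_ [_ [Kbx _]]]]. destruct (HK0 y) as [_ [_ [_ [Kby _]]]].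
    pose proof (Kbx z (W_K _ _ Wx)). pose proof (Kby z (W_K _ _ Wy)).
    pose proof (d_tri (p x) z (p y)). rewrite (d_sym z (p y)) in H1. pose proof (Hsep x y Hxy). lra.
Qed.

End Wset.

End Kset.

Lemma main_result (b : R) : 0 < b -> exists W : X -> Z -> Prop,
    in_E A dist D f u W /\
    (forall x, subset (W x) (V x) /\ clopen dist (W x) /\ diam_le dist (W x) b) /\
    (forall x y, x <> y -> forall z, W x z -> W y z -> False).
Proof.
  intro Hb.
  destruct invV_all as [Vs HVs]. destruct (points Vs HVs) as [p Hp].
  destruct (sep_radius X p l) as [r0 [Hr0 Hs]].
  set (r := Rmin (r0/2) (b/2)).
  assert (Hr : 0 < r) by (apply Rmin_glb_lt; lra).
  assert (HpV : forall x, V x (p x)).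
  { intro x. destruct (Vs_prop Vs HVs x) as [[_ [Hsub _]] _]. apply Hsub. apply (Hp x). }
  assert (HpE : forall x y, A x y -> f (u x) (p x) = p y) by (intros; apply (Hp x); auto).
  destruct (kinv_all p HpV HpE r Hr) as [K HK].
  assert (Hsep : forall x y, x <> y -> 2 * r <= dist (p x) (p y)).
  { intros x y Hxy. destruct (Hp x) as [_ [_ Hd]]. pose proof (Hs x y (Hl x) (Hl y) (Hd y Hxy)).
    pose proof (Rmin_l (r0/2) (b/2)). unfold r in *. lra. }
  destruct (W_final p HpE r K HK Hsep) as [H1 [H2 H3]].
  eexists. split; [exact H1|split; [|exact H3]].
  intro x. destruct (H2 x) as [G1 [G2 G3]]. split; auto. split; auto.
  intros a c Wa Wc. pose proof (G3 a c Wa Wc). pose proof (Rmin_r (r0/2) (b/2)). unfold r in *. lra.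
Qed.

End Main.

End Met.

Theorem lemma4p7 (X : Type) (A : X -> X -> Prop) (Z : Type) (dist : Z -> Z -> R)
    (D : nat -> Z -> Prop) (f : nat -> Z -> Z)
    (HT : mapping_tuple A dist D f)
    (d : nat) (u : X -> nat) (V : X -> Z -> Prop)
    (HU : in_U A dist D f u V) :
  exists W : X -> Z -> Prop,
    in_E A dist D f u W /\
    (forall x, subset (W x) (V x) /\ clopen dist (W x) /\ diam_le dist (W x) ((/ 2) ^ d)) /\
    (forall x y, x <> y -> forall z, W x z -> W y z -> False).
Proof.
  destruct HT as [[l Hl] [HA HS]].
  destruct HS as [[z0 _] [[Hm _] [Hzd [Hperf [Hpc [_ [_ Hncc]]]]]]].
  destruct HU as [HVo HVe].
  apply (main_result Z dist Hm X A D f u V Hzd Hperf Hpc Hncc z0 HA l Hl HVo HVe).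
  apply pow_lt. lra.
Qed.
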